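(* Let $p\ge 2$ and let $a,b\in\mathbb{F}_p$ be nonzero binary floating-point numbers of precision $p$ such that $\mathrm{ufp}(a)\le \mathrm{ufp}(b)$ and $\mathrm{uls}(a)\ge \mathrm{ulp}(b)$. Compute $$s=\circ_1(a+b),\qquad t=\circ_3\bigl(b-\circ_2(s-a)\bigr),$$ where each of $\circ_1,\circ_2,\circ_3$ is a faithful rounding. The three roundings may be different from one another, i.e. each independently rounds down or up. Then $s+t=a+b$.
   Context: $\mathbb{F}_p$ denotes the set of radix-2 floating-point numbers of precision $p$ with unbounded exponent range, so there is no underflow or overflow. Every nonzero $x\in\mathbb{F}_p$ can be written as $x=\pm M\cdot 2^{e}$ with $M,e\in\mathbb{Z}$ and $2^{p-1}\le M<2^p$. For such $x$: - $\mathrm{ufp}(x)=2^{\lfloor\log_2|x|\rfloor}$ is the unit in the first place; - $\mathrm{ulp}(x)=2^{1-p}\,\mathrm{ufp}(x)$ is the unit in the last place; - $\mathrm{uls}(x)$ is the unit in the last significant place, i.e. the largest power of $2$ dividing $x$. A faithful rounding $\circ(y)$ of a real number $y$ is any element of $\{\mathrm{RD}(y),\mathrm{RU}(y)\}$, where $\mathrm{RD}$ and $\mathrm{RU}$ are rounding toward $-\infty$ and toward $+\infty$. In particular $\circ(y)=y$ whenever $y\in\mathbb{F}_p$. The displayed computation is the Fast2Sum algorithm with faithful roundings. *)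

(* Defs.v *)
From Stdlib Require Import Reals ZArith ClassicalEpsilon.
Open Scope R_scope.

Definition is_int (r : R) : Prop := exists z : Z, r = IZR z.

Definition Fp (p : nat) (x : R) : Prop :=
  x = 0 \/
  exists M e : Z, x = IZR M * powerRZ 2 e /\
                  2 ^ (p - 1) <= Rabs (IZR M) < 2 ^ p.

(* ufp(x) = 2^floor(log2 |x|)  (Int_part is the floor function) *)
Definition ufp (x : R) : R :=
  powerRZ 2 (Int_part (ln (Rabs x) / ln 2)).

Definition ulp (p : nat) (x : R) : R :=
  powerRZ 2 (1 - Z.of_nat p) * ufp x.

Definition uls (x : R) : R :=
  powerRZ 2 (epsilon (inhabits 0%Z)
    (fun k : Z => is_int (x / powerRZ 2 k) /\ ~ is_int (x / powerRZ 2 (k + 1)))).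

Definition is_RD (p : nat) (y f : R) : Prop :=
  Fp p f /\ f <= y /\ forall g, Fp p g -> g <= y -> g <= f.
Definition is_RU (p : nat) (y f : R) : Prop :=
  Fp p f /\ y <= f /\ forall g, Fp p g -> y <= g -> f <= g.

Definition faithful (p : nat) (y f : R) : Prop := is_RD p y f \/ is_RU p y f.

(* Main.v *)
Require Import Defs.
From Stdlib Require Import Reals ZArith Lra Lia Classical ClassicalEpsilon.
Open Scope R_scope.

Notation P := (powerRZ 2).

Lemma P_pos z : 0 < P z.
Proof. apply powerRZ_lt; lra. Qed.

Lemma P_add a b : P (a + b) = P a * P b.
Proof. apply powerRZ_add; lra. Qed.

Lemma P_nat z : (0 <= z)%Z -> P z = IZR (2 ^ z).
Proof.
  intros Hz. rewrite <- (Z2Nat.id z Hz). rewrite <- pow_powerRZ.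
  apply pow_IZR.
Qed.

Lemma P_lt a b : (a < b)%Z -> P a < P b.
Proof.
  intros H. replace b with (a + (b - a))%Z by ring. rewrite P_add.
  rewrite (P_nat (b - a)) by lia.
  assert (2 <= 2 ^ (b - a))%Z.
  { replace 2%Z with (2 ^ 1)%Z at 1 by reflexivity. apply Z.pow_le_mono_r; lia. }
  apply IZR_le in H0. pose proof (P_pos a). nra.
Qed.

Lemma P_le_inv a b : P a <= P b -> (a <= b)%Z.
Proof.
  intros H. destruct (Z_le_gt_dec a b) as [|Hg]; auto.
  assert (Hg2 : (b < a)%Z) by lia. apply P_lt in Hg2. lra.
Qed.

Lemma P_lt_inv a b : P a < P b -> (a < b)%Z.
Proof.
  intros H. destruct (Z_lt_ge_dec a b) as [|Hg]; auto.
  assert (P b <= P a).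
  { destruct (Z.eq_dec a b). subst; lra. left; apply P_lt; lia. }
  lra.
Qed.

Lemma shift M e f : (f <= e)%Z -> IZR M * P e = IZR (M * 2 ^ (e - f)) * P f.
Proof.
  intros H. rewrite mult_IZR, <- P_nat by lia. rewrite Rmult_assoc, <- P_add.
  f_equal. f_equal. ring.
Qed.

Lemma abs_scale N e : Rabs (IZR N * P e) = IZR (Z.abs N) * P e.
Proof.
  rewrite Rabs_mult, abs_IZR. rewrite (Rabs_pos_eq (P e)); auto.
  left; apply P_pos.
Qed.

Lemma scale_le N K e : IZR N * P e <= IZR K * P e -> (N <= K)%Z.
Proof.
  intros H. apply le_IZR. pose proof (P_pos e).
  apply Rmult_le_reg_r with (P e); auto.
Qed.

Lemma scale_lt N K e : IZR N * P e < IZR K * P e -> (N < K)%Z.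
Proof.
  intros H. apply lt_IZR. pose proof (P_pos e).
  apply Rmult_lt_reg_r with (P e); auto.
Qed.

Lemma pow2R n : 2 ^ n = IZR (2 ^ Z.of_nat n).
Proof. apply pow_IZR. Qed.

Lemma Fp_inv p x : (1 <= p)%nat -> Fp p x -> x <> 0 ->
  exists M e, x = IZR M * P e /\
    (2 ^ (Z.of_nat p - 1) <= Z.abs M < 2 ^ Z.of_nat p)%Z.
Proof.
  intros Hp [H|[M [e [Hx [H1 H2]]]]] Hn. contradiction.
  exists M, e. split; auto.
  rewrite pow2R, <- abs_IZR in H1, H2.
  apply le_IZR in H1. apply lt_IZR in H2.
  replace (Z.of_nat p - 1)%Z with (Z.of_nat (p - 1)) by lia. lia.
Qed.

Lemma Fp_intro p N e : (1 <= p)%nat -> (Z.abs N <= 2 ^ Z.of_nat p)%Z ->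
  Fp p (IZR N * P e).
Proof.
  intros Hp HN. unfold Fp.
  destruct (Z.eq_dec N 0) as [->|Hn0]. left; ring.
  right.
  assert (Hpp : (2 ^ Z.of_nat p = 2 * 2 ^ (Z.of_nat (p - 1)))%Z).
  { rewrite <- Z.pow_succ_r by lia. f_equal. lia. }
  assert (Hpos : (0 < 2 ^ Z.of_nat (p-1))%Z) by (apply Z.pow_pos_nonneg; lia).
  destruct (Z.eq_dec (Z.abs N) (2 ^ Z.of_nat p)) as [Heq|Hne].
  - exists (N / 2)%Z, (e + 1)%Z.
    assert (HN2 : N = (2 * (N / 2))%Z).
    { destruct (Z.abs_spec N) as [[_ E]|[_ E]]; rewrite E in Heq.
      - rewrite Heq, Hpp, Z.mul_comm, Z.div_mul by lia. lia.
      - assert (N = - (2 * 2 ^ Z.of_nat (p-1)))%Z by lia. rewrite H.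
        replace (- (2 * 2 ^ Z.of_nat (p - 1)))%Z with ((- 2 ^ Z.of_nat (p - 1)) * 2)%Z by ring.
        rewrite Z.div_mul by lia. ring. }
    split.
    + rewrite (shift (N/2) (e+1) e) by lia. f_equal. f_equal.
      replace (e + 1 - e)%Z with 1%Z by ring. lia.
    + rewrite !pow2R, <- abs_IZR. split; [apply IZR_le|apply IZR_lt]; lia.
  - set (L := Z.log2 (Z.abs N)).
    assert (HL := Z.log2_spec (Z.abs N) ltac:(lia)).
    assert (HL0 : (0 <= L)%Z) by apply Z.log2_nonneg.
    assert (HLp : (L < Z.of_nat p)%Z).
    { apply Z.log2_lt_pow2; lia. }
    set (j := (Z.of_nat p - 1 - L)%Z).
    exists (N * 2 ^ j)%Z, (e - j)%Z. split.
    + rewrite (shift N e (e - j)) by lia. replace (e - (e - j))%Z with j by ring. reflexivity.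
    + rewrite !pow2R, <- abs_IZR. rewrite Z.abs_mul.
      rewrite (Z.abs_eq (2 ^ j)) by (apply Z.pow_nonneg; lia).
      assert (E1 : (2 ^ Z.of_nat (p - 1) = 2 ^ L * 2 ^ j)%Z).
      { rewrite <- Z.pow_add_r by lia. f_equal. unfold j. lia. }
      assert (E2 : (2 ^ Z.of_nat p = 2 ^ Z.succ L * 2 ^ j)%Z).
      { rewrite <- Z.pow_add_r by lia. f_equal. unfold j. lia. }
      assert (0 < 2 ^ j)%Z by (apply Z.pow_pos_nonneg; lia).
      rewrite E1, E2. split; [apply IZR_le|apply IZR_lt]; [apply Z.mul_le_mono_nonneg_r|apply Z.mul_lt_mono_pos_r]. all: fold L in HL; lia.
Qed.

Lemma ln_P z : ln (P z) = IZR z * ln 2.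
Proof. rewrite powerRZ_Rpower by lra. unfold Rpower. apply ln_exp. Qed.

Lemma ln2_pos : 0 < ln 2.
Proof. rewrite <- ln_1. apply ln_increasing; lra. Qed.

Lemma ln_le' x y : 0 < x -> x <= y -> ln x <= ln y.
Proof. intros H [H1|H1]. left; apply ln_increasing; auto. subst; lra. Qed.

Lemma ufp_bound x k : P k <= Rabs x < P (k + 1) -> ufp x = P k.
Proof.
  intros [H1 H2]. unfold ufp. f_equal.
  pose proof (P_pos k). pose proof ln2_pos.
  assert (A1 : IZR k * ln 2 <= ln (Rabs x)).
  { rewrite <- ln_P. apply ln_le'; auto. }
  assert (A2 : ln (Rabs x) < IZR (k + 1) * ln 2).
  { rewrite <- ln_P. apply ln_increasing; lra. }
  unfold Int_part. rewrite <- (up_tech _ k). ring.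
  - apply Rmult_le_reg_r with (ln 2); auto. unfold Rdiv. rewrite Rmult_assoc, Rinv_l; lra.
  - apply Rmult_lt_reg_r with (ln 2); auto. unfold Rdiv. rewrite Rmult_assoc, Rinv_l; lra.
Qed.

Lemma ufp_F p M e : (2 ^ (Z.of_nat p - 1) <= Z.abs M < 2 ^ Z.of_nat p)%Z ->
  (1 <= p)%nat -> ufp (IZR M * P e) = P (e + Z.of_nat p - 1).
Proof.
  intros [H1 H2] Hp. apply ufp_bound. rewrite abs_scale.
  replace (e + Z.of_nat p - 1 + 1)%Z with (Z.of_nat p + e)%Z by ring.
  replace (e + Z.of_nat p - 1)%Z with ((Z.of_nat p - 1) + e)%Z by ring.
  rewrite !P_add, (P_nat (Z.of_nat p - 1)), (P_nat (Z.of_nat p)) by lia. pose proof (P_pos e).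
  apply IZR_le in H1. apply IZR_lt in H2. split; [apply Rmult_le_compat_r|apply Rmult_lt_compat_r]; lra.
Qed.

Lemma last_true (Q : nat -> Prop) m : Q 0%nat -> ~ Q m -> exists n, Q n /\ ~ Q (S n).
Proof.
  induction m; intros H0 Hm. contradiction.
  destruct (classic (Q m)). exists m; auto. apply IHm; auto.
Qed.

Lemma uls_spec p x : (1 <= p)%nat -> Fp p x -> x <> 0 ->
  exists k z, uls x = P k /\ x = IZR z * P k.
Proof.
  intros Hp HF Hx. destruct (Fp_inv p x Hp HF Hx) as [M [e [-> [H1 H2]]]].
  set (Pr := fun k : Z => is_int (IZR M * P e / P k) /\ ~ is_int (IZR M * P e / P (k + 1))).
  assert (Ex : exists k, Pr k).
  { set (Q := fun n : nat => is_int (IZR M * P e / P (e + Z.of_nat n))).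
    destruct (last_true Q p) as [n [Hn1 Hn2]].
    - exists M. unfold Q. replace (e + Z.of_nat 0)%Z with e by lia.
      field. pose proof (P_pos e); lra.
    - unfold Q. intros [z Hz]. rewrite P_add in Hz. pose proof (P_pos e).
      rewrite (P_nat (Z.of_nat p)) in Hz by lia.
      assert (IZR M = IZR z * IZR (2 ^ Z.of_nat p)).
      { rewrite <- Hz. field. split. apply not_0_IZR. pose proof (Z.pow_pos_nonneg 2 (Z.of_nat p)). lia. lra. }
      rewrite <- mult_IZR in H0. apply eq_IZR in H0. subst M.
      rewrite Z.abs_mul in H2. rewrite (Z.abs_eq (2 ^ _)) in H2 by (apply Z.pow_nonneg; lia).
      assert (z <> 0%Z). { intro; subst. simpl in H1. pose proof (Z.pow_pos_nonneg 2 (Z.of_nat p - 1)). lia. }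
      nia.
    - exists (e + Z.of_nat n)%Z. split; auto.
      unfold Q in Hn2. replace (e + Z.of_nat n + 1)%Z with (e + Z.of_nat (S n))%Z by lia. auto. }
  pose proof (epsilon_spec (inhabits 0%Z) Pr Ex) as [[z Hz] _].
  exists (epsilon (inhabits 0%Z) Pr), z. split. reflexivity.
  rewrite <- Hz. field. pose proof (P_pos (epsilon (inhabits 0%Z) Pr)). lra.
Qed.

Lemma bracket p y f g1 g2 : faithful p y f -> Fp p g1 -> Fp p g2 ->
  g1 <= y <= g2 -> g1 <= f <= g2.
Proof.
  intros [[_ [H1 H2]]|[_ [H1 H2]]] F1 F2 [Hy1 Hy2].
  - split. apply H2; auto. lra.
  - split. lra. apply H2; auto.
Qed.

Lemma exact p y f : faithful p y f -> Fp p y -> f = y.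
Proof. intros H F. pose proof (bracket p y f y y H F F ltac:(lra)). lra. Qed.

Lemma Fp_mult p g k : (1 <= p)%nat -> Fp p g -> P k <= Rabs g ->
  exists N, g = IZR N * P (k - Z.of_nat p + 1).
Proof.
  intros Hp HF Hg. assert (g <> 0).
  { intro; subst. rewrite Rabs_R0 in Hg. pose proof (P_pos k); lra. }
  destruct (Fp_inv p g Hp HF H) as [M [e [-> [H1 H2]]]].
  rewrite abs_scale in Hg.
  assert (P k < P (Z.of_nat p + e)).
  { rewrite P_add, (P_nat (Z.of_nat p)) by lia. pose proof (P_pos e).
    apply IZR_lt in H2. eapply Rle_lt_trans; [exact Hg|]. apply Rmult_lt_compat_r; auto. }
  apply P_lt_inv in H0.
  exists (M * 2 ^ (e - (k - Z.of_nat p + 1)))%Z. apply shift. lia.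
Qed.

Theorem lemma2 (p : nat) (a b s u t : R) :
  (2 <= p)%nat ->
  Fp p a -> Fp p b -> a <> 0 -> b <> 0 ->
  ufp a <= ufp b ->
  uls a >= ulp p b ->
  faithful p (a + b) s ->
  faithful p (s - a) u ->
  faithful p (b - u) t ->
  s + t = a + b.
Proof.
  intros Hp2 Fa Fb Ha0 Hb0 Hufp Huls Hs Hu Ht.
  assert (Hp : (1 <= p)%nat) by lia.
  set (pz := Z.of_nat p).
  destruct (uls_spec p a Hp Fa Ha0) as [k [z [Hk Haz]]].
  destruct (Fp_inv p a Hp Fa Ha0) as [Ma [ea [Ha [Ha1 Ha2]]]].
  destruct (Fp_inv p b Hp Fb Hb0) as [Mb [eb [Hb [Hb1 Hb2]]]].
  fold pz in Ha1, Ha2, Hb1, Hb2.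
  assert (Hpp : (2 ^ pz = 2 * 2 ^ (pz - 1))%Z).
  { rewrite <- Z.pow_succ_r by lia. f_equal. lia. }
  assert (Hpos : (0 < 2 ^ (pz-1))%Z) by (apply Z.pow_pos_nonneg; lia).
  assert (Hulp : ulp p b = P eb).
  { unfold ulp. rewrite Hb, (ufp_F p) by auto. rewrite <- P_add. f_equal. lia. }
  rewrite Hulp, Hk in Huls.
  assert (Hkeb : (eb <= k)%Z) by (apply P_le_inv; lra).
  rewrite Ha, Hb, !(ufp_F p) in Hufp by auto. apply P_le_inv in Hufp.
  set (A := (z * 2 ^ (k - eb))%Z).
  assert (HA : a = IZR A * P eb) by (rewrite Haz; apply shift; auto).
  assert (HAb : (Z.abs A < 2 ^ pz)%Z).
  { assert (Rabs a < P (pz + eb)).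
    { rewrite Ha, abs_scale, P_add, (P_nat pz) by lia.
      assert (P ea <= P eb).
      { destruct (Z.eq_dec ea eb). subst; lra. left; apply P_lt; lia. }
      apply IZR_lt in Ha2. pose proof (P_pos ea). pose proof (IZR_le _ _ (Z.abs_nonneg Ma)). eapply Rlt_le_trans; [apply Rmult_lt_compat_r; eauto|]. apply Rmult_le_compat_l; auto. apply IZR_le; lia. }
    rewrite HA, abs_scale, P_add, (P_nat pz) in H by lia.
    eapply scale_lt; eauto. }
  set (Y := (A + Mb)%Z).
  assert (Hy : a + b = IZR Y * P eb) by (rewrite HA, Hb; unfold Y; rewrite plus_IZR; ring).
  assert (HYb : (Z.abs Y < 2 * 2 ^ pz)%Z) by (unfold Y; lia).
  assert (HS : exists S, s = IZR S * P eb /\ (Z.abs (S - Y) <= 1)%Z).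
  { destruct (Z_le_gt_dec (Z.abs Y) (2 ^ pz)) as [Hsm|Hbig].
    - exists Y. split. apply (exact p). rewrite <- Hy; auto. apply Fp_intro; auto. lia.
    - destruct (Z.Even_or_Odd Y) as [[W HW]|[W HW]].
      + exists Y. split; [|lia]. apply (exact p). rewrite <- Hy; auto.
        replace (IZR Y * P eb) with (IZR W * P (eb + 1)).
        apply Fp_intro; auto. change (Z.of_nat p) with pz. lia.
        rewrite (shift W (eb+1) eb) by lia. replace (eb + 1 - eb)%Z with 1%Z by ring.
        rewrite HW. f_equal. f_equal. lia.
      + assert (E1 : IZR W * P (eb + 1) = IZR (Y - 1) * P eb).
        { rewrite (shift W (eb+1) eb) by lia. replace (eb + 1 - eb)%Z with 1%Z by ring.
          f_equal. f_equal. lia. }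
        assert (E2 : IZR (W + 1) * P (eb + 1) = IZR (Y + 1) * P eb).
        { rewrite (shift (W + 1) (eb+1) eb) by lia. replace (eb + 1 - eb)%Z with 1%Z by ring.
          f_equal. f_equal. lia. }
        assert (F1 : Fp p (IZR (Y - 1) * P eb)).
        { rewrite <- E1. apply Fp_intro; auto. change (Z.of_nat p) with pz. lia. }
        assert (F2 : Fp p (IZR (Y + 1) * P eb)).
        { rewrite <- E2. apply Fp_intro; auto. change (Z.of_nat p) with pz. lia. }
        pose proof (P_pos eb) as Peb.
        assert (Br : IZR (Y - 1) * P eb <= s <= IZR (Y + 1) * P eb).
        { apply (bracket p (a + b)); auto. rewrite Hy.
          split; apply Rmult_le_compat_r; try lra; apply IZR_le; lia. }
        assert (Fs : Fp p s).
        { destruct Hs as [[X _]|[X _]]; exact X. }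
        assert (Habs : P (pz + eb) <= Rabs s).
        { rewrite P_add, (P_nat pz) by lia.
          destruct (Z_lt_ge_dec 0 Y).
          - rewrite Rabs_pos_eq.
            + eapply Rle_trans; [|apply Br]. apply Rmult_le_compat_r; try lra. apply IZR_le; lia.
            + eapply Rle_trans; [|apply Br]. apply Rmult_le_pos; try lra. apply IZR_le; lia.
          - rewrite Rabs_left.
            + assert (IZR (2 ^ pz) * P eb <= - (IZR (Y + 1) * P eb)).
              { rewrite Ropp_mult_distr_l, <- opp_IZR. apply Rmult_le_compat_r; try lra. apply IZR_le; lia. }
              lra.
            + eapply Rle_lt_trans; [apply Br|]. rewrite <- (Rmult_0_l (P eb)).
              apply Rmult_lt_compat_r; auto. apply IZR_lt; lia. }
        destruct (Fp_mult p s (pz + eb) Hp Fs Habs) as [N HN].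
        replace (pz + eb - Z.of_nat p + 1)%Z with (eb + 1)%Z in HN by (unfold pz; ring).
        rewrite (shift N (eb+1) eb) in HN by lia.
        replace (eb + 1 - eb)%Z with 1%Z in HN by ring.
        exists (N * 2 ^ 1)%Z. split; auto.
        rewrite HN in Br. destruct Br as [B1 B2].
        apply scale_le in B1. apply scale_le in B2. lia. }
  destruct HS as [S [HsS HSY]].
  assert (Hu' : u = s - a).
  { apply (exact p); auto.
    replace (s - a) with (IZR (Mb + (S - Y)) * P eb).
    apply Fp_intro; auto. change (Z.of_nat p) with pz. lia.
    rewrite HsS, HA. unfold Y. rewrite !plus_IZR, !minus_IZR, plus_IZR. ring. }
  assert (Ht' : t = b - u).
  { apply (exact p); auto.
    replace (b - u) with (IZR (Y - S) * P eb).
    apply Fp_intro; auto. change (Z.of_nat p) with pz. lia.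
    rewrite Hu', HsS, HA, Hb. unfold Y. rewrite !minus_IZR, plus_IZR. ring. }
  rewrite Ht', Hu'. ring.
Qed.
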